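(* Let $F \in S$ be a homogeneous form of degree $d$ and $\alpha\in T_1$ a linear form. If $\mathrm{al}(F) - \mathrm{al}(\alpha\circ F) > \mathrm{al}(\alpha\circ F) - \mathrm{al}(\alpha^2\circ F)$, then $r(F) > \mathrm{al}(\alpha\circ F) - \mathrm{al}(\alpha^2\circ F)$.
   Context: $S=\mathbb{C}[x_1,\dots,x_n]$, $T=\mathbb{C}[\alpha_1,\dots,\alpha_n]$ acting on $S$ by $\alpha_i\mapsto\partial/\partial x_i$ (written $\Theta\circ F$). $\mathrm{al}(G)=\dim_{\mathbb{C}}\{\Theta\circ G:\Theta\in T\}$ is the apolar length. $r(F)$ is the Waring rank: the least $r$ with $F=\sum_{i=1}^r c_i\ell_i^d$ for linear forms $\ell_i$ and scalars $c_i$. *)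

(* Defs.v *)
From HB Require Import structures.
From mathcomp Require Import all_boot all_order all_algebra.
Set Implicit Arguments. Unset Strict Implicit. Unset Printing Implicit Defensive.
Import GRing.Theory.
Local Open Scope ring_scope.

(* Polynomials in n variables x_0..x_(n-1) over a field K, in which every
   variable occurs with exponent at most D.  For a form of degree d we take
   D = d: such a form, all its partial derivatives and all powers l^d of
   linear forms live in this finite-dimensional space, and all the operations
   below are exact there. *)

Definition mono (n D : nat) := {ffun 'I_n -> 'I_D.+1}.

Definition pol (K : fieldType) (n D : nat) := {ffun mono n D -> K^o}.

Definition mdeg n D (m : mono n D) : nat := \sum_(i < n) (m i : nat).

Definition homogeneous (K : fieldType) (n D : nat) (P : pol K n D) (d : nat) : Prop :=
  forall m, P m != 0 -> mdeg m = d.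

(* the monomial m * x_i (only used when (m i) < D) *)
Definition incr n D (m : mono n D) (i : 'I_n) : mono n D :=
  [ffun j => if j == i then inord (m j).+1 else m j].

Definition pderiv (K : fieldType) (n D : nat) (i : 'I_n) (P : pol K n D) : pol K n D :=
  [ffun m : mono n D => if (m i < D)%N then (m i).+1%:R * P (incr m i) else 0].

(* iterated derivative d^a = prod_i (d/dx_i)^(a_i), i.e. the action of the
   monomial alpha^a of T *)
Definition dmono (K : fieldType) (n D : nat) (a : mono n D) (P : pol K n D) : pol K n D :=
  foldr (fun i Q => iter (a i) (pderiv i) Q) P (enum 'I_n).

(* action of a linear form alpha = sum_i a_i alpha_i of T_1 *)
Definition lin_act (K : fieldType) (n D : nat) (a : 'I_n -> K) (P : pol K n D) : pol K n D :=
  \sum_(i < n) a i *: pderiv i P.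

(* apolar length: dimension of the space of all derivatives
   {Theta o G : Theta in T}, spanned by the monomial derivatives
   (derivatives of order > D in some variable vanish on this space) *)
Definition al (K : fieldType) (n D : nat) (P : pol K n D) : nat :=
  \dim (span [seq dmono a P | a <- enum {: mono n D}]).

(* polynomial multiplication (exact when the product has exponents <= D) *)
Definition mulp (K : fieldType) (n D : nat) (P Q : pol K n D) : pol K n D :=
  [ffun m : mono n D => \sum_(a : mono n D) \sum_(b : mono n D |
               [forall i, ((a i : nat) + b i == m i)%N]) P a * Q b].

Definition onep (K : fieldType) (n D : nat) : pol K n D :=
  [ffun m : mono n D => if [forall i, (m i : nat) == 0%N] then 1 else 0].

Definition linp (K : fieldType) (n D : nat) (l : 'I_n -> K) : pol K n D :=
  [ffun m : mono n D => \sum_(j < n) if [forall i, (m i : nat) == (i == j)] then l j else 0].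

Definition powp (K : fieldType) (n D : nat) (P : pol K n D) (k : nat) : pol K n D :=
  iter k (mulp P) (@onep K n D).

Definition waring_decomp (K : fieldType) (n d : nat) (F : pol K n d) (r : nat) : Prop :=
  exists (c : 'I_r -> K) (l : 'I_r -> 'I_n -> K),
    F = \sum_(i < r) c i *: powp (@linp K n d (l i)) d.

Definition waring_rank (K : fieldType) (n d : nat) (F : pol K n d) (r : nat) : Prop :=
  waring_decomp F r /\ forall r', waring_decomp F r' -> (r <= r')%N.

(* Main.v *)
Require Import Defs.
From HB Require Import structures.
From mathcomp Require Import all_boot all_order all_algebra.
Local Open Scope ring_scope.
From mathcomp Require Import ring zify.
Set Implicit Arguments. Unset Strict Implicit. Unset Printing Implicit Defensive.
Local Open Scope ring_scope.
Import GRing.Theory.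
Set Implicit Arguments. Unset Strict Implicit.

Section Pow.
Variables (K : fieldType) (n D : nat).
Hypothesis char0 : [pchar K] =i pred0.

Lemma natf_neq0 k : (k > 0)%N -> (k%:R : K) != 0.
Proof. by move=> k0; have /pcharf0P -> := char0; rewrite -lt0n. Qed.

Implicit Types (m : mono n D) (l : 'I_n -> K).

Definition lpow l m : K := \prod_i l i ^+ (m i : nat).
Definition mfact m : K := \prod_i ((m i)`!)%:R.
Definition mcoef m : K := (mdeg m)`!%:R / mfact m.
Definition Gc l k : pol K n D :=
  [ffun m => if mdeg m == k then mcoef m * lpow l m else 0].

Lemma mfact_neq0 m : mfact m != 0.
Proof. by rewrite /mfact; apply/prodf_neq0 => i _; apply: natf_neq0; apply: fact_gt0. Qed.

Lemma incr_val m j i : (m j < D)%N -> (incr m j i : nat) = (m i + (i == j))%N.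
Proof.
move=> lt; rewrite /incr ffunE; case: eqP => [->|_]; last by rewrite addn0.
by rewrite inordK ?addn1 // ltnS.
Qed.

Lemma mdeg_incr m j : (m j < D)%N -> mdeg (incr m j) = (mdeg m).+1.
Proof.
move=> lt; rewrite /mdeg (bigD1 j) //= [in RHS](bigD1 j) //= incr_val // eqxx addn1 addSn; congr (_.+1).
congr (_ + _)%N; apply: eq_bigr => i /negbTE ij; by rewrite incr_val // ij addn0.
Qed.

Lemma lpow_incr l m j : (m j < D)%N -> lpow l (incr m j) = lpow l m * l j.
Proof.
move=> lt; rewrite /lpow (bigD1 j) //= [in RHS](bigD1 j) //= incr_val // eqxx addn1.
rewrite (eq_bigr (fun i => l i ^+ (m i : nat))); first by rewrite exprS -mulrA mulrC.
by move=> i /negbTE ij; rewrite incr_val // ij addn0.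
Qed.

Lemma mfact_incr m j : (m j < D)%N -> mfact (incr m j) = mfact m * ((m j).+1)%:R.
Proof.
move=> lt; rewrite /mfact (bigD1 j) //= [in RHS](bigD1 j) //= incr_val // eqxx addn1.
rewrite (eq_bigr (fun i => ((m i)`!)%:R)); first by rewrite factS natrM -mulrA mulrC.
by move=> i /negbTE ij; rewrite incr_val // ij addn0.
Qed.

Lemma mdeg_ge m j : (m j <= mdeg m)%N.
Proof. by rewrite /mdeg (bigD1 j) //= leq_addr. Qed.

Definition decr m j : mono n D := [ffun i => if i == j then inord (m i).-1 else m i].

Lemma decrK m j : (0 < m j)%N -> (decr m j j < D)%N /\ incr (decr m j) j = m.
Proof.
move=> lt; have hj : ((m j).-1 < D.+1)%N by rewrite (leq_ltn_trans (leq_pred _)).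
have hv : (decr m j j : nat) = (m j).-1 by rewrite ffunE eqxx inordK.
split; first by rewrite hv -ltnS prednK // ltn_ord.
apply/ffunP => i; apply/val_inj => /=; rewrite incr_val; last by rewrite hv -ltnS prednK // ltn_ord.
case: eqP => [->|/eqP ij]; first by rewrite hv addn1 prednK.
by rewrite ffunE (negbTE ij) addn0.
Qed.

Lemma mdeg0 m : (mdeg m == 0%N) = [forall i, (m i : nat) == 0%N].
Proof.
rewrite /mdeg sum_nat_eq0; apply/forallP/forallP => H i; move: (H i) => //.
Qed.

Lemma onepE l : @onep K n D = Gc l 0.
Proof.
apply/ffunP => m; rewrite !ffunE mdeg0; case: forallP => // H.
have H' i : (m i : nat) = 0%N by apply/eqP.
rewrite /mcoef.
have -> : mdeg m = 0%N by apply/eqP; rewrite mdeg0; apply/forallP.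
rewrite /lpow /mfact fact0.
by rewrite !big1 ?divr1 ?mulr1 // => i _; rewrite H' ?expr0.
Qed.

Definition u (j : 'I_n) : mono n D := [ffun i => inord (i == j)].

Lemma u_val (D0 : (0 < D)%N) (j i : 'I_n) : (u j i : nat) = (i == j).
Proof. by rewrite ffunE inordK // ltnS; case: (i == j). Qed.

Lemma linpE (D0 : (0 < D)%N) l (a : mono n D) : linp D l a = \sum_j (if a == u j then l j else 0).
Proof.
rewrite ffunE; apply: eq_bigr => j _; congr (if _ then _ else _).
apply/forallP/eqP => [H|->]; last by move=> i; rewrite u_val.
by apply/ffunP => i; apply/val_inj; rewrite /= u_val //; apply/eqP.
Qed.

Lemma mulp_linpE (D0 : (0 < D)%N) l (Q : pol K n D) m :
  mulp (linp D l) Q m = \sum_j (if (0 < m j)%N then l j * Q (decr m j) else 0).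
Proof.
rewrite ffunE.
transitivity (\sum_(a : mono n D) \sum_(b : mono n D | [forall i, ((a i : nat) + b i == m i)%N])
                \sum_j (if a == u j then l j else 0) * Q b).
  by apply: eq_bigr => a _; apply: eq_bigr => b _; rewrite linpE // mulr_suml.
under eq_bigr => a _ do rewrite exchange_big /=.
rewrite exchange_big /=; apply: eq_bigr => j _.
rewrite (bigD1 (u j)) //= [X in _ + X]big1 ?addr0; last first.
  by move=> a /negbTE aj; apply: big1 => b _; rewrite aj mul0r.
under eq_bigr => b _ do rewrite eqxx.
case: (posnP (m j)) => [mj0|mj0].
  rewrite big_pred0 // => b; apply/negbTE/negP => /forallP/(_ j)/eqP.
  by rewrite u_val // eqxx mj0 add1n.
rewrite (big_pred1 (decr m j)) // => b; apply/forallP/eqP => [H|->].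
  have [dj dK] := decrK mj0.
  apply/ffunP => i; apply/val_inj; apply/eqP; rewrite -(eqn_add2l (i == j)).
  have := H i; rewrite u_val // => /eqP ->; rewrite -{1}dK incr_val // addnC //.
have [dj dK] := decrK mj0.
move=> i; rewrite u_val // -{2}dK incr_val // addnC //.
Qed.

Lemma term_eq l k m j :
  (if (0 < m j)%N then l j * Gc l k (decr m j) else 0) =
  if mdeg m == k.+1 then (m j)%:R * (k`!%:R / mfact m) * lpow l m else 0.
Proof.
case: (posnP (m j)) => [->|mj0]; first by rewrite !mul0r; case: ifP.
have [dj dK] := decrK mj0; rewrite ffunE.
set m' := decr m j in dj dK *; rewrite -dK mdeg_incr // eqSS mfact_incr // lpow_incr //.
rewrite incr_val // eqxx addn1; case: eqP => // Hk.
rewrite /mcoef Hk; have := mfact_neq0 m'; have := natf_neq0 (ltn0Sn (m' j)).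
move=> h1 h2; field.
  by rewrite addrC natr1 h1 h2.
by rewrite mulr0.
Qed.

Lemma powpE l k : (k <= D)%N -> powp (linp D l) k = Gc l k.
Proof.
elim: k => [_|k IH kD]; first by rewrite /powp /= (onepE l).
rewrite /powp iterS -/(powp _ k) IH ?(ltnW kD) //; apply/ffunP => m.
rewrite mulp_linpE ?(leq_ltn_trans _ kD) //.
under eq_bigr => j _ do rewrite term_eq.
rewrite [RHS]ffunE; case: eqP => Hm; last by rewrite big1.
rewrite -!mulr_suml -natr_sum -/(mdeg m) Hm /mcoef Hm factS natrM; ring.
Qed.

Lemma pderiv_lin j : linear (@pderiv K n D j).
Proof.
move=> c P Q; apply/ffunP => m; rewrite !ffunE; case: ifP => _; last by rewrite scaler0 addr0.
by rewrite mulrDr scalerAr.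
Qed.
HB.instance Definition _ j :=
  GRing.isLinear.Build K (pol K n D) (pol K n D) *:%R (@pderiv K n D j) (pderiv_lin j).

Lemma scK (a b : K^o) : a *: b = a * b. Proof. by []. Qed.

Lemma pderivG l k j : (k <= D)%N -> pderiv j (Gc l k) = (k%:R * l j) *: Gc l k.-1.
Proof.
move=> kD; apply/ffunP => m; rewrite !ffunE.
case: ifP => mjD.
  rewrite /mcoef mdeg_incr // mfact_incr // lpow_incr //; case: k kD => [|k] kD /=.
    by rewrite mulr0 mul0r scale0r.
  rewrite eqSS; case: eqP => Hm; last by rewrite mulr0 scaler0.
  rewrite scK.
  rewrite Hm factS natrM.
  have := mfact_neq0 m; have := natf_neq0 (ltn0Sn (m j)) => h1 h2.
  field; by rewrite addrC natr1 h1 h2.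
case: k kD => [|k] kD /=; first by rewrite mul0r scale0r.
case: eqP => Hm; last by rewrite scaler0.
have h2 : (m j <= mdeg m)%N := mdeg_ge m j.
have h1 : (D <= m j)%N by rewrite leqNgt mjD.
by move: (leq_trans kD (leq_trans h1 h2)); rewrite Hm ltnn.
Qed.

Definition G l k := powp (linp D l) k.

Lemma pderivP l k j : (k <= D)%N -> pderiv j (G l k) = (k%:R * l j) *: G l k.-1.
Proof. by move=> kD; rewrite /G !powpE ?pderivG // (leq_trans (leq_pred k)). Qed.

Lemma iter_lin (j : 'I_n) (m : nat) : linear (iter m (@pderiv K n D j)).
Proof. by move=> c P Q; elim: m => //= m ->; rewrite linearP. Qed.

Lemma ffact_add k b c : (k ^_ (b + c) = k ^_ c * (k - c) ^_ b)%N.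
Proof.
elim: b => [|b IH]; first by rewrite ffactn0 muln1.
by rewrite addSn ffactnSr IH ffactnSr mulnA -subnDA [(c + b)%N]addnC.
Qed.

Lemma iterG l k (j : 'I_n) (m : nat) : (k <= D)%N ->
  iter m (pderiv j) (G l k) = ((k ^_ m)%:R * l j ^+ m) *: G l (k - m).
Proof.
move=> kD; elim: m => [|m IH]; first by rewrite ffactn0 expr0 mulr1 scale1r subn0.
rewrite iterS IH linearZ /= pderivP ?(leq_trans (leq_subr _ _)) // scalerA subnS.
by rewrite ffactnSr natrM exprSr; congr (_ *: _); ring.
Qed.

Lemma foldG l k (a : mono n D) (s : seq 'I_n) : (k <= D)%N ->
  foldr (fun i Q => iter (a i) (pderiv i) Q) (G l k) s =
  ((k ^_ (\sum_(i <- s) a i))%:R * \prod_(i <- s) l i ^+ a i) *: G l (k - \sum_(i <- s) a i).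
Proof.
move=> kD; elim: s => [|i s IH] /=.
  by rewrite !big_nil ffactn0 mulr1 scale1r subn0.
have iZ (c : K) (P : pol K n D) : iter (a i) (pderiv i) (c *: P) = c *: iter (a i) (pderiv i) P.
  rewrite -[c *: P]addr0 iter_lin.
  have -> : iter (a i) (pderiv i) (0 : pol K n D) = 0 by elim: (a i : nat) => //= p ->; rewrite linear0.
  by rewrite addr0.
rewrite IH iZ iterG ?(leq_trans (leq_subr _ _)) // scalerA !big_cons -subnDA addnC.
by rewrite ffact_add natrM; congr (_ *: _); ring.
Qed.

Lemma dmonoG l k (a : mono n D) : (k <= D)%N ->
  dmono a (G l k) = ((k ^_ (mdeg a))%:R * lpow l a) *: G l (k - mdeg a).
Proof.
move=> kD; rewrite /dmono foldG // /mdeg /lpow.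
by rewrite !big_enum.
Qed.

Lemma dmono_lin (a : mono n D) : linear (@dmono K n D a).
Proof. move=> c P Q; rewrite /dmono; elim: (enum 'I_n) => //= i s ->; exact: iter_lin. Qed.
HB.instance Definition _ a :=
  GRing.isLinear.Build K (pol K n D) (pol K n D) *:%R (@dmono K n D a) (dmono_lin a).

Lemma lin_act_lin (al0 : 'I_n -> K) : linear (@lin_act K n D al0).
Proof.
move=> c P Q; rewrite /lin_act scaler_sumr -big_split; apply: eq_bigr => i _.
by rewrite linearP scalerDr !scalerA mulrC.
Qed.
HB.instance Definition _ al0 :=
  GRing.isLinear.Build K (pol K n D) (pol K n D) *:%R (@lin_act K n D al0) (lin_act_lin al0).

Definition lf (al0 l : 'I_n -> K) : K := \sum_i al0 i * l i.

Lemma lin_actG al0 l k : (k <= D)%N ->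
  lin_act al0 (G l k) = (k%:R * lf al0 l) *: G l k.-1.
Proof.
move=> kD; rewrite /lin_act; under eq_bigr => i _ do rewrite pderivP // scalerA.
rewrite -scaler_suml; congr (_ *: _); rewrite /lf mulr_sumr; apply: eq_bigr => i _; ring.
Qed.

Section Key.
Variables (s e : nat) (c : 'I_s -> K) (ll : 'I_s -> 'I_n -> K) (alp : 'I_n -> K).
Hypothesis eD : (e <= D)%N.
Hypothesis hc : forall i, c i != 0 -> lf alp (ll i) != 0.

Definition HH : pol K n D := \sum_i c i *: G (ll i) e.

Definition Lfun (v : 'M[K]_(s, e.+1)) : pol K n D :=
  \sum_i \sum_(k : 'I_e.+1) (v i k * (e ^_ k)%:R) *: G (ll i) (e - k).

Lemma Lfun_lin : linear Lfun.
Proof.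
move=> x v w; rewrite /Lfun scaler_sumr -big_split; apply: eq_bigr => i _ /=.
rewrite scaler_sumr -big_split; apply: eq_bigr => k _ /=.
by rewrite !mxE mulrDl scalerDl scalerA mulrA.
Qed.
HB.instance Definition _ := GRing.isLinear.Build K 'M[K]_(s, e.+1) (pol K n D) *:%R Lfun Lfun_lin.

Definition Sf (v : 'M[K]_(s, e.+1)) : 'M[K]_(s, e.+1) :=
  \matrix_(i, k) if (k : nat) == 0%N then 0 else lf alp (ll i) * v i (inord (k : nat).-1).

Lemma Sf_lin : linear Sf.
Proof.
move=> x v w; apply/matrixP => i k; rewrite !mxE; case: eqP => _; first by rewrite mulr0 addr0.
by ring.
Qed.
HB.instance Definition _ := GRing.isLinear.Build K 'M[K]_(s, e.+1) 'M[K]_(s, e.+1) *:%R Sf Sf_lin.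

Definition Qf (v : 'M[K]_(s, e.+1)) : 'M[K]_(s, e.+1) :=
  \matrix_(i, k) if c i == 0 then v i k else 0.

Lemma Qf_lin : linear Qf.
Proof.
move=> x v w; apply/matrixP => i k; rewrite !mxE; case: eqP => _; last by rewrite mulr0 addr0.
by [].
Qed.
HB.instance Definition _ := GRing.isLinear.Build K 'M[K]_(s, e.+1) 'M[K]_(s, e.+1) *:%R Qf Qf_lin.

Definition ev (a : mono n D) : 'M[K]_(s, e.+1) :=
  \matrix_(i, k) if (k : nat) == mdeg a then c i * lpow (ll i) a else 0.

Lemma sum_single (F : 'I_e.+1 -> pol K n D) (p : nat) :
  \sum_(k : 'I_e.+1) (if (k : nat) == p then F k else 0) =
  if (p <= e)%N then F (inord p) else 0.
Proof.
case: leqP => pe.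
  rewrite (bigD1 (inord p)) //= inordK // eqxx big1 ?addr0 // => k kp.
  case: eqP => // kp'; move: kp; suff -> : k = inord p by rewrite eqxx.
  by apply/val_inj; rewrite /= inordK.
rewrite big1 // => k _; case: eqP => // kp.
by move: (ltn_ord k); rewrite kp ltnS leqNgt pe.
Qed.

Lemma dmono_ev a : dmono a HH = Lfun (ev a).
Proof.
rewrite /HH /Lfun linear_sum; apply: eq_bigr => i _ /=.
rewrite linearZ /= dmonoG //.
transitivity (\sum_(k : 'I_e.+1) (if (k : nat) == mdeg a then
     ((c i * lpow (ll i) a) * (e ^_ k)%:R) *: G (ll i) (e - k) else 0)).
  rewrite sum_single; case: leqP => ae.
    by rewrite inordK // scalerA; congr (_ *: _); ring.
  by rewrite ffact_small // mul0r scale0r scaler0.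
by apply: eq_bigr => k _; rewrite mxE; case: eqP => _ //; rewrite mul0r scale0r.
Qed.

Lemma dmono_Sev a : dmono a (lin_act alp HH) = Lfun (Sf (ev a)).
Proof.
rewrite /HH /Lfun [lin_act alp _]linear_sum linear_sum; apply: eq_bigr => i _ /=.
rewrite !linearZ /= lin_actG // linearZ /= dmonoG ?(leq_trans (leq_pred e)) //.
transitivity (\sum_(k : 'I_e.+1) (if (k : nat) == (mdeg a).+1 then
     ((lf alp (ll i) * (c i * lpow (ll i) a)) * (e ^_ k)%:R) *: G (ll i) (e - k) else 0)).
  rewrite sum_single; case: (leqP (mdeg a).+1 e) => ae.
    rewrite inordK // !scalerA ffactnS; have -> : (e.-1 - mdeg a = e - (mdeg a).+1)%N by lia.
    by congr (_ *: _); rewrite natrM; ring.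
  rewrite !scalerA.
  have -> : c i * (e%:R * lf alp (ll i)) * ((e.-1 ^_ mdeg a)%:R * lpow (ll i) a) =
    (c i * lf alp (ll i) * lpow (ll i) a) * ((e * e.-1 ^_ mdeg a)%N%:R) by rewrite natrM; ring.
  by rewrite -ffactnS ffact_small // mulr0 scale0r.
apply: eq_bigr => k _; rewrite /Sf /ev !mxE; have [k0|k0] := eqVneq (k : nat) 0%N.
  by rewrite k0 /= mul0r scale0r.
rewrite inordK; last by move: (ltn_ord k); lia.
case: eqP => ka; case: eqP => ka'; try (by rewrite mulrA); try (by rewrite mulr0 mul0r scale0r);
  by exfalso; lia.
Qed.

Definition evs := [seq ev a | a <- enum {: mono n D}].
Definition EE := <<evs>>%VS.

Lemma ev_in a : ev a \in EE.
Proof. by apply: memv_span; apply: map_f; rewrite mem_enum. Qed.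

Lemma Sev_in a : Sf (ev a) \in EE.
Proof.
case: (ltnP (mdeg a) e) => ae.
  have aj j : (a j < D)%N by apply: (leq_ltn_trans (mdeg_ge a j)); apply: (leq_trans ae).
  have -> : Sf (ev a) = \sum_j alp j *: ev (incr a j).
    apply/matrixP => i k; rewrite summxE /Sf /ev !mxE.
    under eq_bigr => j _ do rewrite !mxE mdeg_incr // lpow_incr //.
    have [k0|k0] := eqVneq (k : nat) 0%N.
      by rewrite big1 // => j _; rewrite k0 /= mulr0.
    rewrite inordK; last by move: (ltn_ord k); lia.
    case: (eqVneq (k : nat) (mdeg a).+1) => ka.
      rewrite ka /= eqxx /lf mulr_suml; apply: eq_bigr => j _; ring.
    have ka' : ((k : nat).-1 == mdeg a) = false by apply/eqP; lia.
    by rewrite ka' mulr0 big1 // => j _; rewrite mulr0.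
  by apply: rpred_sum => j _; apply: rpredZ; apply: ev_in.
have -> : Sf (ev a) = 0; last by apply: mem0v.
apply/matrixP => i k; rewrite /Sf /ev !mxE.
have [k0|k0] := eqVneq (k : nat) 0%N => //.
rewrite inordK; last by move: (ltn_ord k); lia.
have ka' : ((k : nat).-1 == mdeg a) = false by apply/eqP; move: (ltn_ord k); lia.
by rewrite ka' mulr0.
Qed.

Lemma E_Q v : v \in EE -> Qf v = 0.
Proof.
have sub : (EE <= lker (linfun Qf))%VS.
  apply/span_subvP => _ /mapP [a _ ->]; rewrite memv_ker lfunE /=; apply/eqP.
  apply/matrixP => i k; rewrite /Qf /ev !mxE.
  by case: (eqVneq (c i) 0) => [->|] //; case: ifP; rewrite ?mul0r.
by move=> vE; have := subvP sub v vE; rewrite memv_ker lfunE => /eqP.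
Qed.

Lemma kerS_bound : (\dim (EE :&: lker (linfun Sf)) <= #|[pred i | c i != 0%R]|)%N.
Proof.
set Dl := [seq (delta_mx i ord_max : 'M[K]_(s, e.+1)) | i <- enum [pred i | c i != 0]].
apply: (leq_trans (dimvS (_ : _ <= <<Dl>>)%VS)).
  apply/subvP => v; rewrite memv_cap => /andP [vE vK].
  have hQ := E_Q vE; move: vK; rewrite memv_ker lfunE /= => /eqP hS.
  have claim i k : (c i == 0) || (k != ord_max) -> v i k = 0.
    case/orP => [/eqP ci|km].
      by have := congr1 (fun M : 'M[K]_(s, e.+1) => M i k) hQ; rewrite /Qf !mxE ci eqxx.
    have kl : (k < e)%N by move: (ltn_ord k) km; rewrite -val_eqE /=; lia.
    have := congr1 (fun M : 'M[K]_(s, e.+1) => M i (inord k.+1)) hS; rewrite /Sf !mxE inordK //=.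
    have -> : (inord k : 'I_e.+1) = k by apply/val_inj; rewrite /= inordK //; lia.
    case: (eqVneq (c i) 0) => [ci _|ci]; first by have := congr1 (fun M : 'M[K]_(s, e.+1) => M i k) hQ; rewrite /Qf !mxE ci eqxx.
    by move/eqP; rewrite mulf_eq0 (negbTE (hc ci)) /= => /eqP.
  rewrite [v]matrix_sum_delta; apply: rpred_sum => i _; apply: rpred_sum => k _.
  case: (boolP ((c i == 0) || (k != ord_max))) => h.
    by rewrite claim // scale0r mem0v.
  move: h; rewrite negb_or negbK => /andP [ci /eqP ->].
  by apply: rpredZ; apply: memv_span; apply: map_f; rewrite mem_enum.
by apply: (leq_trans (dim_span _)); rewrite size_map -cardE.
Qed.

Lemma key : (al HH <= al (lin_act alp HH) + #|[pred i | c i != 0%R]|)%N.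
Proof.
have e1 : al HH = \dim (linfun Lfun @: EE).
  rewrite /al /EE limg_span; congr (\dim <<_>>); rewrite /evs.
  by elim: (enum _) => //= a l ->; rewrite lfunE /= dmono_ev.
have e2 : al (lin_act alp HH) = \dim (linfun Lfun @: (linfun Sf @: EE)).
  rewrite /al /EE !limg_span; congr (\dim <<_>>); rewrite /evs.
  by elim: (enum _) => //= a l ->; rewrite !lfunE /= dmono_Sev.
have SE : (linfun Sf @: EE <= EE)%VS.
  rewrite /EE /evs limg_span; apply/span_subvP => _ /mapP [_ /mapP [a _ ->] ->].
  by rewrite lfunE /= Sev_in.
have h1 := limg_ker_dim (linfun Lfun) EE.
have h2 := limg_ker_dim (linfun Lfun) (linfun Sf @: EE).
have h3 := limg_ker_dim (linfun Sf) EE.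
have h4 := dimvS (capvS SE (subvv (lker (linfun Lfun)))).
have h5 := kerS_bound.
rewrite e1 e2; lia.
Qed.
End Key.
End Pow.

Unset Implicit Arguments. Set Strict Implicit.

Theorem mainTheorem6 (K : closedFieldType) (charK0 : [pchar K] =i pred0)
  (n d : nat) (F : pol K n d) (hF : homogeneous F d) (alpha : 'I_n -> K) :
  (al F)%:Z - (al (lin_act alpha F))%:Z >
    (al (lin_act alpha F))%:Z - (al (lin_act alpha (lin_act alpha F)))%:Z ->
  forall r : nat, waring_rank F r ->
  (al (lin_act alpha F))%:Z - (al (lin_act alpha (lin_act alpha F)))%:Z < r%:Z.
Proof.
move=> hyp r [[c [l FE]] _].
have FH : F = HH d d c l by rewrite FE.
case: (boolP [exists i, (c i != 0) && (lf alpha (l i) == 0)]) => [/existsP [i0 /andP [ci0 li0]]|hno].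
  set cc := fun i => c i * (d%:R * lf alpha (l i)).
  have aF : lin_act alpha F = HH d d.-1 cc l.
    rewrite FH /HH linear_sum; apply: eq_bigr => i _.
    by rewrite linearZ /= (lin_actG charK0) // scalerA.
  have hcc i : cc i != 0 -> lf alpha (l i) != 0.
    by apply: contraNN => /eqP h; rewrite /cc h !mulr0.
  have := key charK0 (leq_pred d) hcc; rewrite -aF => hk.
  have hcard : ( #|[pred i | cc i != 0%R]| < r)%N.
    have r0 : (0 < r)%N by case: (r) i0 {ci0 li0} => [[]|].
    apply: (@leq_ltn_trans #|predC1 i0|).
      apply: subset_leq_card; apply/subsetP => i; rewrite !inE; apply: contraNN => /eqP ->.
      by rewrite /cc (eqP li0) !mulr0.
    by rewrite cardC1 card_ord prednK.
  have hk' : (al (lin_act alpha F) <= al (lin_act alpha (lin_act alpha F)) + #|[pred i | cc i != 0%R]|)%N := hk.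
  clear hk; clearbody cc; lia.
have hc i : c i != 0 -> lf alpha (l i) != 0.
  move=> ci; apply/negP => li; move/negP: hno; apply; apply/existsP; exists i; by rewrite ci li.
have := key charK0 (leqnn d) hc; rewrite -FH => hk.
have hcard : ( #|[pred i | c i != 0%R]| <= r)%N by apply: (leq_trans (max_card _)); rewrite card_ord.
have hk' : (al F <= al (lin_act alpha F) + #|[pred i | c i != 0%R]|)%N := hk.
clear hk; lia.
Qed.
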